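(* Let $C\subseteq H$ be nonempty, closed and convex, take $B=N_C$ in Algorithm 3.1, and suppose Assumption 3.1 holds, with $p_n\ge0$, $\mu_n\ge 0$ and $\sum_n p_n<\infty$. Let $\{w_n\},\{y_n\}$ be generated by Algorithm 3.1. If $\lim_{n\to\infty}\|w_n-y_n\|=0$ and $\{w_n\}$ converges weakly to some $z\in H$, then $z\in S$.
   Context: Let $H$ be a real Hilbert space, $A:H\to H$ a single-valued mapping and $B:H\to 2^H$ a set-valued mapping, and let $\Omega:=(A+B)^{-1}(0)=\{x\in H:\ 0\in Ax+Bx\}$. Algorithm 3.1 is the following iteration. Fix $x_0,x_1\in H$, $\mu\in(0,1)$, $\lambda_1>0$, real sequences $\{\alpha_n\},\{\beta_n\},\{\theta_n\}$ and nonnegative real sequences $\{\mu_n\},\{p_n\}$. For $n=1,2,\dots$ compute $w_n=x_n+\alpha_n(x_n-x_{n-1})$, $z_n=x_n+\beta_n(x_n-x_{n-1})$, $y_n=(I+\lambda_nB)^{-1}(I-\lambda_nA)w_n$, and set $\lambda_{n+1}=\min\{(\mu_n+\mu)\|w_n-y_n\|/\|Aw_n-Ay_n\|,\ \lambda_n+p_n\}$ if $Aw_n\neq Ay_n$, and $\lambda_{n+1}=\lambda_n+p_n$ otherwise. If $w_n=y_n$ the algorithm stops (then $y_n\in\Omega$). Otherwise set $x_{n+1}=(1-\theta_n)z_n+\theta_n\big(y_n-\lambda_n(Ay_n-Aw_n)\big)$ and continue. Here $I$ is the identity and $(I+\lambda B)^{-1}$ is the resolvent of $B$. Throughout, it is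 assumed that the algorithm does not stop, so that infinite sequences $\{x_n\},\{w_n\},\{z_n\},\{y_n\},\{\lambda_n\}$ are generated. $N_C(x)=\{z\in H:\langle z,y-x\rangle\le0\ \forall y\in C\}$ for $x\in C$ and $N_C(x)=\emptyset$ otherwise is the normal cone; $P_C$ is the metric projection onto $C$, and $(I+\lambda N_C)^{-1}=P_C$. $S$ denotes the solution set of the variational inequality VI$(A,C)$: find $x^*\in C$ with $\langle Ax^*,y-x^*\rangle\ge0$ for all $y\in C$. Assumption 3.1: (i) $S\neq\emptyset$; (ii) $A$ is pseudomonotone (i.e. $\langle Ax,y-x\rangle\ge0$ implies $\langle Ay,y-x\rangle\ge0$) and Lipschitz continuous on $H$, and whenever $x_n\rightharpoonup w^*$ weakly in $H$, one has $\|Aw^*\|\le\liminf_{n\to\infty}\|Ax_n\|$. *)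

(* Defs.v *)
From HB Require Import structures.
From mathcomp Require Import all_boot all_order all_algebra.
From mathcomp Require Import all_classical all_reals all_analysis.
Set Implicit Arguments. Unset Strict Implicit. Unset Printing Implicit Defensive.
Import Order.TTheory GRing.Theory Num.Theory.
Import numFieldNormedType.Exports.
Local Open Scope classical_set_scope.
Local Open Scope ring_scope.

(* A real Hilbert space is a complete normed space H together with an inner
   product ip whose induced norm is the norm of H. *)
Definition is_inner_product (R : realType) (H : normedModType R)
  (ip : H -> H -> R) : Prop :=
  [/\ (forall x y, ip x y = ip y x),
      (forall a x y z, ip (a *: x + y) z = a * ip x z + ip y z),
      (forall x, 0 <= ip x x),
      (forall x, ip x x = 0 -> x = 0)
    & (forall x, `|x| = Num.sqrt (ip x x))].

Definition weak_cvg (R : realType) (H : normedModType R)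
  (ip : H -> H -> R) (u : nat -> H) (z : H) : Prop :=
  forall v, (fun n => ip (u n) v) @ \oo --> ip z v.

Definition normal_cone (R : realType) (H : normedModType R)
  (ip : H -> H -> R) (C : set H) (x : H) : set H :=
  [set v | C x /\ forall c, C c -> ip v (c - x) <= 0].

(* y = (I + lam B)^{-1} u, i.e. u \in y + lam B y *)
Definition resolvent_rel (R : realType) (H : normedModType R)
  (B : H -> set H) (lam : R) (u y : H) : Prop :=
  exists b, B y b /\ u = y + lam *: b.

Definition VI_sol (R : realType) (H : normedModType R)
  (ip : H -> H -> R) (A : H -> H) (C : set H) : set H :=
  [set x | C x /\ forall c, C c -> 0 <= ip (A x) (c - x)].

Definition pseudomonotone (R : realType) (H : normedModType R)
  (ip : H -> H -> R) (A : H -> H) : Prop :=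
  forall x y, 0 <= ip (A x) (y - x) -> 0 <= ip (A y) (y - x).

Definition lipschitz_on_H (R : realType) (H : normedModType R) (A : H -> H) :=
  exists L : R, forall x y, `|A x - A y| <= L * `|x - y|.

Definition weak_seq_lsc_normA (R : realType) (H : normedModType R)
  (ip : H -> H -> R) (A : H -> H) : Prop :=
  forall (u : nat -> H) (ws : H), weak_cvg ip u ws ->
    ((`|A ws|)%:E <= limn_einf (fun n => (`|A (u n)|)%:E))%E.

(* Algorithm 3.1 with B = N_C, assumed never to stop (w_n <> y_n, n >= 1). *)
Definition algorithm31 (R : realType) (H : normedModType R)
  (ip : H -> H -> R) (A : H -> H) (C : set H) (mu lam1 : R)
  (alpha beta theta mun p : nat -> R)
  (x w z y : nat -> H) (lam : nat -> R) : Prop :=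
  [/\ 0 < mu < 1, 0 < lam1 /\ lam 1%N = lam1,
      (forall n, 0 <= mun n), (forall n, 0 <= p n)
    & forall n, (1 <= n)%N ->
      [/\ w n = x n + alpha n *: (x n - x n.-1)
          /\ z n = x n + beta n *: (x n - x n.-1),
          resolvent_rel (normal_cone ip C) (lam n) (w n - lam n *: A (w n)) (y n),
          lam n.+1 = (if A (w n) != A (y n) then
                        Num.min ((mun n + mu) * `|w n - y n| / `|A (w n) - A (y n)|)
                                (lam n + p n)
                      else lam n + p n),
          w n != y n
        & x n.+1 = (1 - theta n) *: z n
                   + theta n *: (y n - lam n *: (A (y n) - A (w n)))]].

(* Main.v *)
Require Import Defs.
From HB Require Import structures.
From mathcomp Require Import all_boot all_order all_algebra.
From mathcomp Require Import all_classical all_reals all_analysis.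
From mathcomp Require Import ring lra.
Import Order.TTheory GRing.Theory Num.Theory.
Import numFieldNormedType.Exports.
Local Open Scope classical_set_scope.
Local Open Scope ring_scope.
Section IP.
Context {R : realType} {H : normedModType R} {ip : H -> H -> R}.
Hypothesis hip : is_inner_product ip.

Lemma ipC x y : ip x y = ip y x.
Proof. by case: hip. Qed.

Lemma ipDZl a x y z : ip (a *: x + y) z = a * ip x z + ip y z.
Proof. by case: hip. Qed.

Lemma ip0l z : ip 0 z = 0.
Proof.
have := ipDZl 1 0 0 z; rewrite scaler0 addr0 mul1r => h; lra.
Qed.

Lemma ip0r z : ip z 0 = 0.
Proof. by rewrite ipC ip0l. Qed.

Lemma ipDl x y z : ip (x + y) z = ip x z + ip y z.
Proof. by rewrite -(scale1r x) ipDZl mul1r scale1r. Qed.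

Lemma ipZl a x z : ip (a *: x) z = a * ip x z.
Proof. by rewrite -(addr0 (a *: x)) ipDZl ip0l addr0. Qed.

Lemma ipNl x z : ip (- x) z = - ip x z.
Proof. by rewrite -scaleN1r ipZl mulN1r. Qed.

Lemma ipBl x y z : ip (x - y) z = ip x z - ip y z.
Proof. by rewrite ipDl ipNl. Qed.

Lemma ipDr x y z : ip z (x + y) = ip z x + ip z y.
Proof. by rewrite ipC ipDl !(ipC z). Qed.

Lemma ipZr a x z : ip z (a *: x) = a * ip z x.
Proof. by rewrite ipC ipZl ipC. Qed.

Lemma ipNr x z : ip z (- x) = - ip z x.
Proof. by rewrite ipC ipNl ipC. Qed.

Lemma ipBr x y z : ip z (x - y) = ip z x - ip z y.
Proof. by rewrite ipDr ipNr. Qed.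

Lemma ipxx x : ip x x = `|x| ^+ 2.
Proof. by case: hip => _ _ h _ ->; rewrite sqr_sqrtr. Qed.

Lemma norm2D u v : `|u + v| ^+ 2 = `|u| ^+ 2 + 2 * ip u v + `|v| ^+ 2.
Proof. rewrite -!ipxx ipDl !ipDr (ipC v u); ring. Qed.

Lemma norm2B u v : `|u - v| ^+ 2 = `|u| ^+ 2 - 2 * ip u v + `|v| ^+ 2.
Proof. by rewrite norm2D ipNr normrN; ring. Qed.

Lemma CS x y : `|ip x y| <= `|x| * `|y|.
Proof.
have key t : 0 <= `|x| ^+ 2 + 2 * t * ip x y + t ^+ 2 * `|y| ^+ 2.
  have := norm2D x (t *: y); rewrite ipZr normrZ exprMn real_normK ?num_real//.
  rewrite -mulrA => <-; exact: exprn_ge0.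
have [->|y0] := eqVneq y 0.
  by rewrite ip0r !normr0 mulr0.
have c0 : 0 < `|y| ^+ 2 by rewrite exprn_gt0 // normr_gt0.
set a := `|x| ^+ 2 in key *; set b := ip x y in key *; set c := `|y| ^+ 2 in key c0.
have h := key (- b / c).
have : 0 <= c * (a + 2 * (- b / c) * b + (- b / c) ^+ 2 * c) by rewrite mulr_ge0 // ltW.
have -> : c * (a + 2 * (- b / c) * b + (- b / c) ^+ 2 * c) = c * a - b ^+ 2.
  by field; rewrite gt_eqF.
rewrite subr_ge0 => hb.
have hN : 0 <= `|x| * `|y| by rewrite mulr_ge0.
have : b ^+ 2 <= (`|x| * `|y|) ^+ 2 by rewrite exprMn mulrC.
rewrite ler_norml => hb2; apply/andP; split; nra.
Qed.

End IP.
Lemma bounded_seqP (R : realType) (V : normedModType R) (a : nat -> V) :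
  cvgn a -> exists M, forall n, `|a n| <= M.
Proof.
move=> /cvg_seq_bounded [M [_ HM]]; exists (M + 1) => n.
by apply: (HM (M + 1)) => //; rewrite ltrDl.
Qed.

Lemma weak_bounded (R : realType) (H : completeNormedModType R)
  (ip : H -> H -> R) (w : nat -> H) (zs : H) :
  is_inner_product ip -> weak_cvg ip w zs -> exists M, forall n, `|w n| <= M.
Proof.
move=> hip hw.
pose F : set (H -> R^o) := [set f | exists n, f = fun v => ip (w n) v].
have hF : forall f, F f -> bounded_fun_norm f /\ linear f.
  move=> f [n ->]; split.
    move=> r; exists (`|w n| * r) => v hv.
    have h1 := CS hip (w n) v; apply: (le_trans h1); exact: ler_wpM2l.
  by move=> a u v; rewrite /= ipDr // ipZr.
have hpb : pointwise_bounded F.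
  move=> v; have [M HM] := @bounded_seqP _ _ _ (cvgP _ (hw v) : cvgn (fun n => ip (w n) v : R^o)).
  by exists M => f [n ->]; exact: HM.
have [M HM] := Banach_Steinhauss hF hpb 1.
exists M => n.
have [->|wn0] := eqVneq (w n) 0.
  by rewrite normr0 (le_trans _ (HM _ (ex_intro _ n erefl) 0 _)) // normr0.
have := HM _ (ex_intro _ n erefl) (`|w n|^-1 *: w n).
rewrite ipZr // ipxx // normrZ normfV normr_id mulVf ?normr_eq0 // => /(_ (lexx _)).
by rewrite expr2 mulrA mulVf ?normr_eq0 // mul1r ger0_norm.
Qed.
Lemma lim_le_ev (R : realType) (u : nat -> R) (l b : R) :
  u @ \oo --> l -> (\forall n \near \oo, u n <= b) -> l <= b.
Proof.
move=> hu hb; rewrite -(cvg_lim _ hu) //; apply: limr_le => //.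
exact: cvgP hu.
Qed.
Arguments lim_le_ev {R u l b}.

Lemma lim_ge_ev (R : realType) (u : nat -> R) (l b : R) :
  u @ \oo --> l -> (\forall n \near \oo, b <= u n) -> b <= l.
Proof.
move=> hu hb; rewrite -(cvg_lim _ hu) //; apply: limr_ge => //.
exact: cvgP hu.
Qed.
Arguments lim_ge_ev {R u l b}.

Lemma small_ge0 (R : realType) (a K : R) :
  (forall e, 0 < e -> e <= 1 -> - (e * K) <= a) -> 0 <= a.
Proof.
move=> h; apply/ler_addgt0Pr => e e0.
set k := `|K| + 1.
have k0 : 0 < k by rewrite /k ltr_wpDl.
set e' := Num.min 1 (e / k).
have e'0 : 0 < e' by rewrite lt_min ltr01 divr_gt0.
have e'1 : e' <= 1 by rewrite ge_min lexx.
have e'k : e' <= e / k by rewrite ge_min lexx orbT.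
have e'k2 : e' * k <= e by rewrite -ler_pdivlMr.
have h1 := h e' e'0 e'1.
have h2 : e' * K <= e' * `|K| by apply: ler_wpM2l; [exact: ltW | exact: ler_norm].
have h3 : e' * k = e' * `|K| + e' by rewrite /k mulrDr mulr1.
lra.
Qed.
Lemma weak_closed (R : realType) (H : normedModType R) (ip : H -> H -> R)
  (C : set H) (y : nat -> H) (z : H) :
  is_inner_product ip -> C !=set0 -> closed C ->
  convex_set (C : set (convex_lmodType H)) ->
  (forall n, C (y n)) -> (exists M, forall n, `|y n| <= M) ->
  weak_cvg ip y z -> C z.
Proof.
move=> hip [c0 Cc0] clC cvC Cy [Y HY] hw.
pose D := [set r | exists2 c, C c & r = `|z - c| ^+ 2].
have lbD : has_lbound D by exists 0 => _ [c _ ->]; exact: exprn_ge0.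
have neD : D !=set0 by exists (`|z - c0| ^+ 2); exists c0.
have hiD : has_inf D by split.
set d2 := inf D.
have infle c : C c -> d2 <= `|z - c| ^+ 2.
  by move=> Cc; apply: ge_inf => //; exists c.
have Y0 : 0 <= Y by apply: le_trans (HY 0%N).
set K := 2 * (Y + `|z|) ^+ 2 + 2 * (d2 + 1).
have main t dl : 0 < t -> t <= 1 -> 0 < dl -> dl <= 1 ->
    2 * t * d2 <= dl + t ^+ 2 * K.
  move=> t0 t1 dl0 dl1.
  have [_ [c Cc ->] hc] := inf_adherent dl0 hiD.
  have key n : 2 * t * ip (y n - c) (z - c) <= dl + t ^+ 2 * K.
    have Cct : C (t *: y n + (1 - t) *: c).
      have := cvC (y n) c (Itv01 (ltW t0) t1) (mem_set (Cy n)) (mem_set Cc).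
      by move/set_mem.
    have h1 := infle _ Cct.
    have e : z - (t *: y n + (1 - t) *: c) = (z - c) - t *: (y n - c).
      rewrite scalerBr scalerBl scale1r opprD opprB !addrA.
      by rewrite opprB addrA [RHS]addrAC [LHS]addrAC [X in X + _ = _]addrAC.
    rewrite e (norm2B hip) (ipZr hip) normrZ exprMn ger0_norm ?(ltW t0) // (ipC hip (z - c)) in h1.
    have hyc : `|y n - c| ^+ 2 <= K.
      have a1 : `|y n - c| <= `|y n - z| + `|z - c|.
        have -> : y n - c = (y n - z) + (z - c) by rewrite addrA subrK.
        exact: ler_normD.
      have a2 : `|y n - z| <= Y + `|z| by rewrite (le_trans (ler_normB _ _)) // lerD2r.
      have a3 : `|z - c| ^+ 2 <= d2 + 1 by lra.
      have n1 := normr_ge0 (y n - z); have n2 := normr_ge0 (z - c).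
      have n3 := normr_ge0 (y n - c).
      have b1 : `|y n - c| ^+ 2 <= (`|y n - z| + `|z - c|) ^+ 2.
        by rewrite lerXn2r // ?nnegrE ?addr_ge0.
      have b2 : `|y n - z| ^+ 2 <= (Y + `|z|) ^+ 2.
        by rewrite lerXn2r // ?nnegrE ?addr_ge0.
      have b3 : (`|y n - z| + `|z - c|) ^+ 2 <= 2 * `|y n - z| ^+ 2 + 2 * `|z - c| ^+ 2.
        have e3 : 2 * `|y n - z| ^+ 2 + 2 * `|z - c| ^+ 2 - (`|y n - z| + `|z - c|) ^+ 2 = (`|y n - z| - `|z - c|) ^+ 2 by ring.
        by rewrite -subr_ge0 e3 sqr_ge0.
      rewrite /K; lra.
    have ht : t ^+ 2 * `|y n - c| ^+ 2 <= t ^+ 2 * K by rewrite ler_wpM2l // exprn_ge0 // ltW.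
    have -> : 2 * t * ip (y n - c) (z - c) = 2 * (t * ip (y n - c) (z - c)) by rewrite mulrA.
    lra.
  have hl : (fun n => 2 * t * ip (y n - c) (z - c)) @ \oo --> 2 * t * `|z - c| ^+ 2.
    have h0 : (fun n => ip (y n - c) (z - c)) @ \oo --> `|z - c| ^+ 2.
      rewrite -(ipxx hip) (ipBl hip).
      under eq_fun do rewrite (ipBl hip).
      exact: cvgB (hw _) (cvg_cst _).
    exact: cvgMr h0.
  have hb : 2 * t * `|z - c| ^+ 2 <= dl + t ^+ 2 * K.
    by apply: (lim_le_ev hl); apply: nearW => n; exact: key.
  have := infle c Cc => hd.
  have : 2 * t * d2 <= 2 * t * `|z - c| ^+ 2 by rewrite ler_wpM2l // mulr_ge0 // ltW.
  lra.
have d2le : d2 <= 0.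
  suff : 0 <= - d2 by lra.
  apply: (@small_ge0 _ _ (K / 2)) => e e0 e1.
  have h : 2 * e * d2 <= e ^+ 2 * K.
    apply/ler_addgt0Pr => dl dl0.
    have [dl1|dl1] := leP dl 1.
      by rewrite addrC; apply: main.
    have := main e 1 e0 e1 ltr01 (lexx _); lra.
  nra.
apply: clC => B /nbhs_ballP [eps eps0 hB].
have eps20 : 0 < eps ^+ 2 by rewrite exprn_gt0.
have [_ [c Cc ->] hc] := inf_adherent eps20 hiD.
exists c; split => //; apply: hB.
rewrite -ball_normE /ball_ /=.
rewrite ltNge; apply/negP => h.
have : eps ^+ 2 <= `|z - c| ^+ 2 by rewrite !expr2 ler_pM // ltW.
lra.
Qed.
Lemma liminf_ev (R : realType) (u : nat -> R) (a : R) :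
  (a%:E < limn_einf (fun n => (u n)%:E))%E -> \forall n \near \oo, a < u n.
Proof.
rewrite limn_einf_lim (cvg_lim _ (@cvg_einfs_sup _ _)) //.
move=> /ereal_sup_gt [_ [n0 _ <-]] h.
exists n0 => // k /= hk.
have : (einfs (fun n => (u n)%:E) n0 <= (u k)%:E)%E.
  by apply: ereal_inf_lbound; exists k.
by move=> h2; rewrite -lte_fin (lt_le_trans h).
Qed.
Lemma minty_vi (R : realType) (H : normedModType R) (ip : H -> H -> R)
  (A : H -> H) (C : set H) (z : H) (L : R) :
  is_inner_product ip -> convex_set (C : set (convex_lmodType H)) -> C z ->
  (forall x y, `|A x - A y| <= L * `|x - y|) ->
  (forall c, C c -> 0 <= ip (A c) (c - z)) -> VI_sol ip A C z.
Proof.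
move=> hip cvC Cz hL hm; split => // c Cc.
apply: (@small_ge0 _ _ (L * `|c - z| ^+ 2)) => t t0 t1.
set ct := t *: c + (1 - t) *: z.
have Cct : C ct.
  exact: (set_mem (cvC c z (Itv01 (ltW t0) t1) (mem_set Cc) (mem_set Cz))).
have e1 : ct - z = t *: (c - z).
  by rewrite /ct scalerBl scale1r scalerBr addrA addrAC addrK.
have h1 := hm _ Cct; rewrite e1 (ipZr hip) in h1.
have h2 : 0 <= ip (A ct) (c - z) by rewrite -(pmulr_rge0 _ t0).
have h3 : ip (A z) (c - z) = ip (A ct) (c - z) - ip (A ct - A z) (c - z).
  by rewrite (ipBl hip); ring.
have h4 : `|ip (A ct - A z) (c - z)| <= L * (t * `|c - z|) * `|c - z|.
  apply: le_trans (CS hip _ _) _; apply: ler_wpM2r => //.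
  by move: (hL ct z); rewrite e1 normrZ (ger0_norm (ltW t0)).
have e : L * (t * `|c - z|) * `|c - z| = t * (L * `|c - z| ^+ 2) by ring.
rewrite e in h4.
have h5 := ler_norm (ip (A ct - A z) (c - z)).
lra.
Qed.
Lemma minty_step (R : realType) (H : normedModType R) (ip : H -> H -> R)
  (A : H -> H) (z c : H) (w : nat -> H) (L Wb a : R) :
  is_inner_product ip -> pseudomonotone ip A ->
  (forall x y, `|A x - A y| <= L * `|x - y|) -> 0 <= L ->
  (forall n, `|w n| <= Wb) -> weak_cvg ip w z -> 0 < a ->
  (\forall n \near \oo, a <= `|A (w n)|) ->
  (forall e, 0 < e -> \forall n \near \oo, - e <= ip (A (w n)) (c - w n)) ->
  0 <= ip (A c) (c - z).
Proof.
move=> hip pm hL L0 hW hw a0 haw hkey.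
have Wb0 : 0 <= Wb by apply: le_trans (hW 0%N).
set S := `|c| + a^-1 + Wb.
have S0 : 0 <= S by rewrite /S !addr_ge0 // invr_ge0 ltW.
set K2 := L * S / a + `|A c| / a + 1.
apply: (@small_ge0 _ _ K2) => e e0 e1.
have hz : \forall t \near \oo, `|ip z (A c) - ip (w t) (A c)| < e.
  by apply: cvgr_dist_lt => //; exact: hw.
have [n [hn1 [hn2 hn3]]] := filter_ex (filterI haw (filterI (hkey e e0) hz)).
set g := A (w n).
have g0 : 0 < `|g| by apply: lt_le_trans hn1.
set d := (e / `|g| ^+ 2) *: g.
have hd : `|d| = e / `|g|.
  rewrite /d normrZ ger0_norm; last by rewrite divr_ge0 // ltW.
  by field; rewrite gt_eqF.
have hdle : `|d| <= e / a.
  rewrite hd; apply: ler_wpM2l; first exact: ltW.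
  by rewrite lef_pV2 ?posrE.
have hdle1 : `|d| <= a^-1.
  apply: (le_trans hdle); rewrite -[leRHS]mul1r; apply: ler_wpM2r => //.
  by rewrite invr_ge0 ltW.
set c' := c + d.
have hpos : 0 <= ip g (c' - w n).
  rewrite /c' addrAC (ipDr hip) (ipZr hip) (ipxx hip) divfK; last first.
    by rewrite expf_neq0 // gt_eqF.
  lra.
have hpm := pm _ _ hpos.
have E : ip (A c) (c - z) = ip (A c') (c' - w n) - ip (A c' - A c) (c' - w n)
    - ip (A c) d + ip (A c) (w n - z).
  by rewrite (ipBl hip) /c' !(ipBr hip) !(ipDr hip); ring.
have ecd : c' - c = d by rewrite /c' addrAC subrr add0r.
have t1 : ip (A c' - A c) (c' - w n) <= L * (e / a) * S.
  apply: (le_trans (ler_norm _)); apply: (le_trans (CS hip _ _)).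
  apply: ler_pM => //.
    by rewrite (le_trans (hL _ _)) // ecd ler_wpM2l.
  rewrite /c' /S (le_trans (ler_normB _ _)) // lerD //.
    by rewrite (le_trans (ler_normD _ _)) // lerD2l.
have t2 : ip (A c) d <= `|A c| * (e / a).
  apply: (le_trans (ler_norm _)); apply: (le_trans (CS hip _ _)).
  exact: ler_wpM2l.
have t3 : - e <= ip (A c) (w n - z).
  rewrite (ipBr hip) (ipC hip _ z) (ipC hip _ (w n)).
  move: hn3; rewrite distrC => /ltW; rewrite ler_norml => /andP[h _]; lra.
have eK : e * K2 = L * (e / a) * S + `|A c| * (e / a) + e.
  by rewrite /K2; field; rewrite gt_eqF.
rewrite E; lra.
Qed.
Theorem proposition3p2 (R : realType) (H : completeNormedModType R)
  (ip : H -> H -> R) (A : H -> H) (C : set H) (mu lam1 : R)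
  (alpha beta theta mun p : nat -> R)
  (x w z y : nat -> H) (lam : nat -> R) (zs : H) :
  is_inner_product ip ->
  C !=set0 -> closed C -> convex_set (C : set (convex_lmodType H)) ->
  VI_sol ip A C !=set0 ->
  pseudomonotone ip A -> lipschitz_on_H A -> weak_seq_lsc_normA ip A ->
  cvgn (series p) ->
  algorithm31 ip A C mu lam1 alpha beta theta mun p x w z y lam ->
  (fun n => `|w n - y n|) @ \oo --> 0 ->
  weak_cvg ip w zs ->
  VI_sol ip A C zs.
Proof.
move=> hip C0 clC cvC _ pm [L0 hL0] lsc _ alg hwy hw.
set L := `|L0| + 1.
have L0' : 0 < L by rewrite /L ltr_wpDl.
have hL x1 x2 : `|A x1 - A x2| <= L * `|x1 - x2|.
  apply: (le_trans (hL0 x1 x2)); apply: ler_wpM2r => //.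
  by rewrite /L (le_trans (ler_norm _)) // lerDl.
case: alg => /andP[mu0 mu1] [lam10 lam1E] mun0 p0 step.
set m := Num.min lam1 (mu / L).
have m0 : 0 < m by rewrite lt_min lam10 divr_gt0.
have lamb : forall n, (1 <= n)%N -> m <= lam n.
  elim => [//|n IH] hn.
  case: n IH hn => [_ _|n IH _]; first by rewrite lam1E ge_min lexx.
  have IH' := IH isT.
  have [_ _ hl _ _] := step n.+1 isT.
  rewrite hl; case: ifP => hne; last by rewrite (le_trans IH') // lerDl.
  rewrite le_min; apply/andP; split; last by rewrite (le_trans IH') // lerDl.
  rewrite ge_min; apply/orP; right.
  have hd : 0 < `|A (w n.+1) - A (y n.+1)| by rewrite normr_gt0 subr_eq0.
  rewrite ler_pdivlMr //.
  have h := hL (w n.+1) (y n.+1).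
  have h1 : mu / L * `|A (w n.+1) - A (y n.+1)| <= mu / L * (L * `|w n.+1 - y n.+1|).
    by apply: ler_wpM2l => //; rewrite divr_ge0 // ltW.
  have h2 : mu / L * (L * `|w n.+1 - y n.+1|) = mu * `|w n.+1 - y n.+1|.
    by field; rewrite gt_eqF.
  have h3 : mu * `|w n.+1 - y n.+1| <= (mun n.+1 + mu) * `|w n.+1 - y n.+1|.
    by apply: ler_wpM2r => //; rewrite lerDr.
  lra.
have hCy n : (1 <= n)%N -> C (y n).
  by move=> hn; have [_ [b [[Cy _] _]] _ _ _] := step n hn.
have hres n c : (1 <= n)%N -> C c ->
    - (`|w n - y n| * `|c - y n|) / m <= ip (A (w n)) (c - y n).
  move=> hn Cc; have [_ [b [[_ hb] he]] _ _ _] := step n hn.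
  have eb : lam n *: b = (w n - lam n *: A (w n)) - y n.
    by rewrite he addrC addKr.
  have lp : 0 < lam n by apply: lt_le_trans (lamb n hn).
  have h1 : ip (lam n *: b) (c - y n) <= 0.
    by rewrite (ipZl hip); apply: mulr_ge0_le0; [exact: ltW | exact: hb].
  rewrite eb !(ipBl hip) (ipZl hip) in h1.
  have h2 := CS hip (w n - y n) (c - y n).
  rewrite (ipBl hip) in h2.
  have h3 := ler_norm (- (ip (w n) (c - y n) - ip (y n) (c - y n))).
  rewrite normrN in h3.
  set X := ip (A (w n)) (c - y n) in h1 *.
  set P := `|w n - y n| * `|c - y n| in h2 *.
  have hX : - P <= m * X.
    have [X0|X0] := leP 0 X; first by rewrite (le_trans _ (mulr_ge0 (ltW m0) X0)) // oppr_le0 /P mulr_ge0.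
    have : lam n * X <= m * X by apply: ler_wnM2r; [exact: ltW | exact: lamb].
    lra.
  by rewrite ler_pdivrMr // mulrC.
have [Wb hWb] := @weak_bounded _ _ _ _ _ hip hw.
have Wb0 : 0 <= Wb by apply: le_trans (hWb 0%N).
have hN1 : \forall n \near \oo, `| `|w n - y n| | < 1.
  by apply: cvgr0_norm_lt => //; exact: hwy.
have [N _ hN] := hN1.
set N' := maxn N 1.
have hNp n : (N' <= n)%N -> (1 <= n)%N /\ `|y n| <= Wb + 1.
  move=> hn; split; first by apply: leq_trans hn; rewrite leq_maxr.
  have := hN n (leq_trans (leq_maxl _ _) hn); rewrite /= normr_id => h.
  have -> : y n = w n - (w n - y n) by rewrite opprB addrC subrK.
  by rewrite (le_trans (ler_normB _ _)) // lerD // ltW.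
have hwyw : weak_cvg ip y zs.
  move=> v.
  have h0 : (fun n => ip (w n - y n) v) @ \oo --> 0.
    apply: (@squeeze_cvgr _ _ _ _ (fun n => - (`|w n - y n| * `|v|))
                                (fun n => `|w n - y n| * `|v|)).
    - by apply: nearW => n; rewrite -ler_norml; exact: CS hip _ _.
    - by rewrite -oppr0 -(mul0r `|v|); apply: cvgN; apply: cvgMl.
    - by rewrite -(mul0r `|v|); apply: cvgMl.
  have -> : (fun n => ip (y n) v) = (fun n => ip (w n) v - ip (w n - y n) v).
    by apply: funext => n; rewrite (ipBl hip); ring.
  by rewrite -[ip zs v]subr0; apply: cvgB => //; exact: hw.
have CzS : C zs.
  apply: (@weak_closed _ _ ip C (fun k => y (k + N')%N)) => //.
  - by move=> k; apply: hCy; case: (hNp (k + N')%N (leq_addl _ _)).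
  - by exists (Wb + 1) => k; case: (hNp (k + N')%N (leq_addl _ _)).
  - by move=> v; have := hwyw v; rewrite -(cvg_shiftn N').
have [Az0|Az0] := eqVneq (A zs) 0.
  by split => // c _; rewrite Az0 (ip0l hip).
set a := `|A zs| / 2.
have a0 : 0 < a by rewrite divr_gt0 // normr_gt0.
have haw : \forall n \near \oo, a <= `|A (w n)|.
  apply: filterS (fun n => @ltW _ _ _ _) _.
  apply: liminf_ev.
  apply: (lt_le_trans _ (lsc w zs hw)).
  have : 0 < `|A zs| by rewrite normr_gt0.
  rewrite lte_fin /a; lra.
have hkey c : C c -> forall e, 0 < e ->
    \forall n \near \oo, - e <= ip (A (w n)) (c - w n).
  move=> Cc e e0.
  set K1 := (`|c| + Wb + 1) / m + (L * Wb + `|A 0|).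
  have K10 : 0 < K1.
    by rewrite /K1 ltr_pwDl ?divr_gt0 ?ltr_wpDl // ?addr_ge0 // mulr_ge0 // ltW.
  have hs : \forall n \near \oo, `| `|w n - y n| | < e / K1.
    have eK0 : 0 < e / K1 by rewrite divr_gt0.
    by apply: cvgr0_norm_lt => //; exact: hwy.
  have hge : \forall n \near \oo, (N' <= n)%N by exists N'.
  apply: filterS2 hge hs => n hn hs'.
  have [hn1 hyb] := hNp n hn.
  rewrite normr_id in hs'.
  have E : ip (A (w n)) (c - w n) = ip (A (w n)) (c - y n) + ip (A (w n)) (y n - w n).
    by rewrite !(ipBr hip); ring.
  have l1 := hres n c hn1 Cc.
  have l1' : `|c - y n| <= `|c| + Wb + 1.
    by rewrite -addrA (le_trans (ler_normB _ _)) // lerD2l.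
  have l1'' : - (`|w n - y n| * (`|c| + Wb + 1)) / m <= - (`|w n - y n| * `|c - y n|) / m.
    rewrite !mulNr lerN2; apply: ler_wpM2r; first by rewrite invr_ge0 ltW.
    exact: ler_wpM2l.
  have hAw : `|A (w n)| <= L * Wb + `|A 0|.
    have := hL (w n) 0; rewrite subr0 => h.
    have -> : A (w n) = (A (w n) - A 0) + A 0 by rewrite subrK.
    rewrite (le_trans (ler_normD _ _)) // lerD2r (le_trans h) //.
    by apply: ler_wpM2l; [exact: ltW | exact: hWb].
  have l2 : - ((L * Wb + `|A 0|) * `|w n - y n|) <= ip (A (w n)) (y n - w n).
    rewrite lerNl; apply: (le_trans (ler_norm _)); rewrite normrN; apply: (le_trans (CS hip _ _)).
    by rewrite distrC; apply: ler_wpM2r.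
  have eK : `|w n - y n| * K1 < e by rewrite -ltr_pdivlMr.
  have eK1 : `|w n - y n| * K1 = (`|w n - y n| * (`|c| + Wb + 1)) / m
        + (L * Wb + `|A 0|) * `|w n - y n| by rewrite /K1; field; rewrite gt_eqF.
  have eK2 : - (`|w n - y n| * (`|c| + Wb + 1)) / m = - ((`|w n - y n| * (`|c| + Wb + 1)) / m).
    by rewrite mulNr.
  rewrite E; lra.
have hm c : C c -> 0 <= ip (A c) (c - zs).
  move=> Cc; exact: (@minty_step _ _ _ _ _ _ _ _ _ _ hip pm hL (ltW L0') hWb hw a0 haw (hkey c Cc)).
exact: (@minty_vi _ _ _ _ _ _ _ hip cvC CzS hL hm).
Qed.
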